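(* An atom of the lattice $\mathbf{Com}$ is a neutral element of $\mathbf{Com}$ if and only if it is one of the varieties $\mathcal{SL}$ or $\mathcal{ZM}$.
   Context: $\mathbf{Com}$ denotes the lattice of all commutative semigroup varieties. An element $x$ of a lattice is neutral if for all $y,z$: $(x\vee y)\wedge(y\vee z)\wedge(z\vee x)=(x\wedge y)\vee(y\wedge z)\vee(z\wedge x)$. $\mathcal{SL}=\operatorname{var}\{x^2=x,\ xy=yx\}$ is the variety of semilattices and $\mathcal{ZM}=\operatorname{var}\{xy=0\}$ the variety of null semigroups, where $xy=0$ abbreviates $xyz=zxy=xy$. *)

(* Defs.v *)
(* Varieties of commutative semigroups are represented by their
   equational theories (fully invariant congruences on the free semigroup over
   countably many variables containing associativity and commutativity).
   By Birkhoff's theorem this is an anti-isomorphism with the lattice Com. *)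

Inductive term : Type :=
| Var : nat -> term
| Mul : term -> term -> term.

Fixpoint subst (s : nat -> term) (t : term) : term :=
  match t with
  | Var n => s n
  | Mul a b => Mul (subst s a) (subst s b)
  end.

Definition rel := term -> term -> Prop.

Definition subrel (E F : rel) : Prop := forall a b, E a b -> F a b.
Definition releq (E F : rel) : Prop := forall a b, E a b <-> F a b.

Definition is_com_theory (E : rel) : Prop :=
  (forall a, E a a) /\
  (forall a b, E a b -> E b a) /\
  (forall a b c, E a b -> E b c -> E a c) /\
  (forall a b c d, E a b -> E c d -> E (Mul a c) (Mul b d)) /\
  (forall a b (s : nat -> term), E a b -> E (subst s a) (subst s b)) /\
  (forall a b c, E (Mul (Mul a b) c) (Mul a (Mul b c))) /\
  (forall a b, E (Mul a b) (Mul b a)).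

Definition gen (I : rel) : rel :=
  fun a b => forall E, is_com_theory E -> subrel I E -> E a b.

(* the trivial variety (bottom of Com): all identities hold *)
Definition full : rel := fun _ _ => True.

Definition vle (V W : rel) : Prop := subrel W V.

Definition vjoin (V W : rel) : rel := fun a b => V a b /\ W a b.
Definition vmeet (V W : rel) : rel := gen (fun a b => V a b \/ W a b).

Definition neutral (x : rel) : Prop :=
  forall y z, is_com_theory y -> is_com_theory z ->
    releq (vmeet (vmeet (vjoin x y) (vjoin y z)) (vjoin z x))
          (vjoin (vjoin (vmeet x y) (vmeet y z)) (vmeet z x)).

Definition atom (x : rel) : Prop :=
  is_com_theory x /\ ~ releq x full /\
  forall y, is_com_theory y -> vle y x -> releq y full \/ releq y x.

Definition x0 := Var 0.
Definition x1 := Var 1.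
Definition x2 := Var 2.

Definition SL : rel :=
  gen (fun a b => a = Mul x0 x0 /\ b = x0).

Definition ZM : rel :=
  gen (fun a b => (a = Mul (Mul x0 x1) x2 /\ b = Mul x0 x1) \/
                  (a = Mul (Mul x2 x0) x1 /\ b = Mul x0 x1)).

(* Main.v *)
Require Import Defs.
From Stdlib Require Import Arith Lia List Permutation Classical.


Fixpoint leaves (t : term) : list nat :=
  match t with Var n => n :: nil | Mul a b => leaves a ++ leaves b end.
Fixpoint cnt (t : term) (x : nat) : nat :=
  match t with Var n => if Nat.eqb n x then 1 else 0 | Mul a b => cnt a x + cnt b x end.
Fixpoint len (t : term) : nat :=
  match t with Var _ => 1 | Mul a b => len a + len b end.

Definition AC (a b : term) : Prop := forall x, cnt a x = cnt b x.
Definition cont (t : term) (x : nat) : Prop := 0 < cnt t x.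
Definition cp (a b : term) : Prop := forall x, cont a x <-> cont b x.

Lemma cnt_leaves t x : cnt t x = count_occ Nat.eq_dec (leaves t) x.
Proof.
  induction t; simpl.
  - destruct (Nat.eq_dec n x); destruct (Nat.eqb_spec n x); congruence.
  - rewrite count_occ_app; congruence.
Qed.

Lemma len_leaves t : len t = length (leaves t).
Proof. induction t; simpl; auto. rewrite length_app; auto. Qed.

Lemma AC_perm a b : AC a b <-> Permutation (leaves a) (leaves b).
Proof.
  rewrite Permutation_count_occ with (eq_dec := Nat.eq_dec).
  unfold AC; split; intros H x; specialize (H x); rewrite ?cnt_leaves in *; auto.
Qed.

Lemma AC_len a b : AC a b -> len a = len b.
Proof. intro H; apply AC_perm in H; rewrite !len_leaves; apply Permutation_length; auto. Qed.

Lemma len_pos t : 1 <= len t.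
Proof. induction t; simpl; lia. Qed.

Lemma cnt_le_len t x : cnt t x <= len t.
Proof. induction t; simpl; [destruct (Nat.eqb n x)|]; lia. Qed.

Fixpoint rlist (l : list nat) : term :=
  match l with
  | nil => Var 0
  | n :: nil => Var n
  | n :: l' => Mul (Var n) (rlist l')
  end.

Lemma leaves_rlist l : l <> nil -> leaves (rlist l) = l.
Proof.
  induction l as [|n l IH]; intro H; [congruence|].
  destruct l as [|m l']; simpl; auto.
  simpl in IH. rewrite IH by discriminate. auto.
Qed.

Definition is_cong (E : rel) : Prop :=
  (forall a, E a a) /\
  (forall a b, E a b -> E b a) /\
  (forall a b c, E a b -> E b c -> E a c) /\
  (forall a b c d, E a b -> E c d -> E (Mul a c) (Mul b d)) /\
  (forall a b c, E (Mul (Mul a b) c) (Mul a (Mul b c))) /\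
  (forall a b, E (Mul a b) (Mul b a)).

Lemma com_cong E : is_com_theory E -> is_cong E.
Proof. intros (?&?&?&?&?&?&?); repeat split; auto. Qed.

Lemma rlist_app E : is_cong E -> forall l1 l2, l1 <> nil -> l2 <> nil ->
  E (Mul (rlist l1) (rlist l2)) (rlist (l1 ++ l2)).
Proof.
  intros (Hr&Hs&Ht&Hc&Ha&Hm). induction l1 as [|n l1 IH]; intros l2 H1 H2; [congruence|].
  destruct l1 as [|m l1'].
  - simpl. destruct l2; [congruence|]. apply Hr.
  - change (rlist (n :: m :: l1')) with (Mul (Var n) (rlist (m :: l1'))).
    change ((n :: m :: l1') ++ l2) with (n :: ((m :: l1') ++ l2)).
    eapply Ht; [apply Ha|].
    simpl app. change (rlist (n :: m :: l1' ++ l2)) with (Mul (Var n) (rlist (m :: l1' ++ l2))).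
    apply Hc; [apply Hr|]. apply IH; [discriminate|auto].
Qed.

Lemma leaves_nonnil t : leaves t <> nil.
Proof. induction t; simpl; [discriminate|]. destruct (leaves t1); [congruence|discriminate]. Qed.

Lemma E_rlist E : is_cong E -> forall t, E t (rlist (leaves t)).
Proof.
  intros HE. pose proof HE as (Hr&Hs&Ht&Hc&Ha&Hm). induction t; simpl.
  - apply Hr.
  - eapply Ht; [apply Hc; [exact IHt1|exact IHt2]|]. apply rlist_app; auto; apply leaves_nonnil.
Qed.

Lemma E_perm E : is_cong E -> forall l1 l2, Permutation l1 l2 -> E (rlist l1) (rlist l2).
Proof.
  intros HE. pose proof HE as (Hr&Hs&Ht&Hc&Ha&Hm). intros l1 l2 P. induction P.
  - apply Hr.
  - destruct l as [|a l].
    + apply Permutation_nil in P; subst; apply Hr.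
    + destruct l' as [|b l']. { apply Permutation_sym, Permutation_nil in P; discriminate. }
      change (E (Mul (Var x) (rlist (a :: l))) (Mul (Var x) (rlist (b :: l')))). apply Hc; auto.
  - destruct l as [|a l].
    + simpl. apply Hm.
    + change (E (Mul (Var y) (Mul (Var x) (rlist (a :: l)))) (Mul (Var x) (Mul (Var y) (rlist (a :: l))))).
      eapply Ht; [apply Hs, Ha|]. eapply Ht; [apply Hc; [apply Hm|apply Hr]|]. apply Ha.
  - eauto.
Qed.

Lemma ACsub E : is_cong E -> forall a b, AC a b -> E a b.
Proof.
  intros HE a b H. pose proof HE as (Hr&Hs&Ht&Hc&Ha&Hm).
  apply AC_perm in H. apply (Ht _ (rlist (leaves a))); [apply E_rlist; auto|].
  apply (Ht _ (rlist (leaves b))); [apply E_perm; auto|]. apply Hs, E_rlist; auto.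
Qed.


Section CT.
Variable E : rel.
Hypothesis HE : is_com_theory E.
Lemma ct_refl a : E a a. Proof. destruct HE as (?&?&?&?&?&?&?); auto. Qed.
Lemma ct_sym a b : E a b -> E b a. Proof. destruct HE as (?&?&?&?&?&?&?); auto. Qed.
Lemma ct_trans a b c : E a b -> E b c -> E a c. Proof. destruct HE as (?&?&?&?&?&?&?); eauto. Qed.
Lemma ct_mul a b c d : E a b -> E c d -> E (Mul a c) (Mul b d). Proof. destruct HE as (?&?&?&?&?&?&?); auto. Qed.
Lemma ct_sub a b s : E a b -> E (subst s a) (subst s b). Proof. destruct HE as (?&?&?&?&?&?&?); auto. Qed.
Lemma ct_AC a b : AC a b -> E a b. Proof. apply ACsub, com_cong, HE. Qed.
Lemma ct_mulL a b c : E a b -> E (Mul a c) (Mul b c). Proof. intro; apply ct_mul; auto using ct_refl. Qed.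
Lemma ct_mulR a b c : E a b -> E (Mul c a) (Mul c b). Proof. intro; apply ct_mul; auto using ct_refl. Qed.
End CT.

Ltac etr t := match goal with H : is_com_theory ?E |- ?E _ _ => apply (ct_trans _ H _ t) end.

Lemma AC_refl a : AC a a. Proof. intro; auto. Qed.
Lemma AC_sym a b : AC a b -> AC b a. Proof. intros H x; auto. Qed.
Lemma AC_trans a b c : AC a b -> AC b c -> AC a c. Proof. intros H1 H2 x; rewrite H1; auto. Qed.

Lemma AC_cong : is_cong AC.
Proof. repeat split; unfold AC; simpl; intros; try lia; try congruence.
Qed.

Lemma subst_comp s t a : subst s (subst t a) = subst (fun k => subst s (t k)) a.
Proof. induction a; simpl; congruence. Qed.

Lemma subst_id a : subst Var a = a.
Proof. induction a; simpl; congruence. Qed.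

Lemma cont_Mul a b x : cont (Mul a b) x <-> cont a x \/ cont b x.
Proof. unfold cont; simpl; lia. Qed.
Lemma cont_Var n x : cont (Var n) x <-> n = x.
Proof. unfold cont; simpl; destruct (Nat.eqb_spec n x); split; intros; lia. Qed.

Lemma subst_ext s s' a : (forall k, cont a k -> s k = s' k) -> subst s a = subst s' a.
Proof.
  induction a; simpl; intros H.
  - apply H, cont_Var; auto.
  - rewrite IHa1, IHa2; auto; intros k Hk; apply H, cont_Mul; auto.
Qed.

Lemma AC_subst s a b : AC a b -> AC (subst s a) (subst s b).
Proof.
  intro H. apply (ACsub (fun a b => AC (subst s a) (subst s b))); auto.
  repeat split; unfold AC; simpl; intros; try lia; try congruence.

Qed.

Lemma AC_subst_pt s s' a : (forall k, AC (s k) (s' k)) -> AC (subst s a) (subst s' a).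
Proof. intros H; induction a; simpl; auto. intro x; simpl; rewrite IHa1, IHa2; auto. Qed.

Lemma cont_subst s a x : cont (subst s a) x <-> exists k, cont a k /\ cont (s k) x.
Proof.
  induction a; simpl.
  - split; [intro; exists n; split; auto; apply cont_Var; auto|].
    intros (k & Hk & Hx). apply cont_Var in Hk; subst; auto.
  - rewrite cont_Mul, IHa1, IHa2. split.
    + intros [(k&?&?)|(k&?&?)]; exists k; rewrite cont_Mul; auto.
    + intros (k & Hk & Hx); apply cont_Mul in Hk as [?|?]; [left|right]; eauto.
Qed.

Lemma len_subst s a : len a <= len (subst s a).
Proof. induction a; simpl; [apply len_pos|lia]. Qed.

Fixpoint pw (t : term) (n : nat) : term :=
  match n with 0 => t | S n => Mul (pw t n) t end.
Fixpoint mulp (s z : term) (k : nat) : term :=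
  match k with 0 => s | S k => Mul (mulp s z k) z end.

Lemma cnt_pw t n x : cnt (pw t n) x = S n * cnt t x.
Proof. induction n; simpl in *; lia. Qed.
Lemma cnt_mulp s z k x : cnt (mulp s z k) x = cnt s x + k * cnt z x.
Proof. induction k; simpl in *; lia. Qed.
Lemma len_pw t n : len (pw t n) = S n * len t.
Proof. induction n; simpl in *; lia. Qed.
Lemma subst_pw s t n : subst s (pw t n) = pw (subst s t) n.
Proof. induction n; simpl; congruence. Qed.
Lemma subst_mulp s a z k : subst s (mulp a z k) = mulp (subst s a) (subst s z) k.
Proof. induction k; simpl; congruence. Qed.
Lemma cont_pw t n x : cont (pw t n) x <-> cont t x.
Proof. unfold cont; rewrite cnt_pw; nia. Qed.

Ltac acs := unfold AC; intro; simpl; rewrite ?cnt_pw, ?cnt_mulp; simpl; rewrite ?cnt_pw, ?cnt_mulp; nia.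

Lemma iter_mulp E : is_com_theory E -> forall s z, E s (Mul s z) -> forall k, E s (mulp s z k).
Proof.
  intros HE s z H k. induction k; simpl; [apply ct_refl; auto|].
  etr (Mul s z); auto. apply ct_mulL; auto.
Qed.

Lemma iter_pw E : is_com_theory E -> forall s z, E s (Mul s z) -> forall k, E s (Mul s (pw z k)).
Proof.
  intros HE s z H k. etr (mulp s z (S k)); [apply iter_mulp; auto|]. apply ct_AC; auto. acs.
Qed.

Lemma E_pw E : is_com_theory E -> forall a b k, E a b -> E (pw a k) (pw b k).
Proof. intros HE a b k H; induction k; simpl; auto. apply ct_mul; auto. Qed.

Lemma E_mulp E : is_com_theory E -> forall a b z k, E a b -> E (mulp a z k) (mulp b z k).
Proof. intros HE a b z k H; induction k; simpl; auto. apply ct_mulL; auto. Qed.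

Lemma gen_ct I : is_com_theory (gen I).
Proof.
  unfold gen; repeat split; intros;
  match goal with H : is_com_theory ?E |- _ => pose proof H as (?&?&?&?&?&?&?) end;
  repeat match goal with H : forall E, is_com_theory E -> subrel I E -> E ?x ?y |- _ =>
     let h := fresh in pose proof (H _ ltac:(eassumption) ltac:(eassumption)) as h; clear H end; eauto.
Qed.
Lemma gen_incl (I : rel) a b : I a b -> gen I a b.
Proof. intros H E HE HI; auto. Qed.
Lemma gen_min (I E : rel) : is_com_theory E -> subrel I E -> subrel (gen I) E.
Proof. intros HE HI a b H; apply H; auto. Qed.

Lemma sub_list (l1 l2 : list nat) :
  (forall x, count_occ Nat.eq_dec l1 x <= count_occ Nat.eq_dec l2 x) ->
  exists L, Permutation l2 (l1 ++ L).
Proof.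
  revert l2; induction l1 as [|h t IH]; intros l2 H.
  - exists l2; auto.
  - assert (Hin : In h l2). { apply (count_occ_In Nat.eq_dec). specialize (H h); simpl in H.
      destruct (Nat.eq_dec h h); [lia|congruence]. }
    apply in_split in Hin as (p & r & ->).
    destruct (IH (p ++ r)) as (L & HL).
    { intro x. specialize (H x). simpl in H. rewrite count_occ_app in *. simpl in H.
      destruct (Nat.eq_dec h x); lia. }
    exists L. simpl. eapply Permutation_trans; [apply Permutation_sym, Permutation_middle|].
    apply perm_skip; auto.
Qed.

Lemma decomp s u : (forall x, cnt s x <= cnt u x) -> (exists x, cnt s x < cnt u x) ->
  exists z, AC u (Mul s z).
Proof.
  intros H1 (x0 & H2).
  destruct (sub_list (leaves s) (leaves u)) as (L & HL).
  { intro x; rewrite <- !cnt_leaves; auto. }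
  assert (HLn : L <> nil).
  { intro; subst. rewrite app_nil_r in HL. apply AC_perm in HL. specialize (HL x0). lia. }
  exists (rlist L). apply AC_perm. simpl. rewrite leaves_rlist; auto.
Qed.

Lemma exists_cont t : exists x, cont t x.
Proof. induction t; [exists n; apply cont_Var; auto|]. destruct IHt1 as (x&?); exists x; apply cont_Mul; auto. Qed.

Lemma cont_dec t x : {cont t x} + {~ cont t x}.
Proof. unfold cont; apply lt_dec. Qed.

Lemma AC_cont a b x : AC a b -> (cont a x <-> cont b x).
Proof. unfold cont; intro H; rewrite H; tauto. Qed.

Lemma len1_var t : len t = 1 -> exists n, t = Var n.
Proof. destruct t; simpl; eauto. pose proof (len_pos t1); pose proof (len_pos t2); lia. Qed.

Lemma cnt_two t p k : p <> k -> cnt t p + cnt t k <= len t.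
Proof. intro; induction t; simpl; [destruct (Nat.eqb_spec n p), (Nat.eqb_spec n k)|]; lia. Qed.

Lemma cnt_only t p : (forall k, k <> p -> cnt t k = 0) -> cnt t p = len t.
Proof.
  induction t; simpl; intros H.
  - destruct (Nat.eqb_spec n p); auto. specialize (H n). rewrite Nat.eqb_refl in H. lia.
  - rewrite IHt1, IHt2; auto; intros k Hk; specialize (H k Hk); lia.
Qed.


Lemma cp_ct : is_com_theory cp.
Proof.
  unfold cp; repeat split; intros; try tauto.
  - apply H; auto. - apply H; auto.
  - apply H0, H; auto. - apply H, H0; auto.
  - rewrite cont_Mul in *. rewrite <- H, <- H0; auto.
  - rewrite cont_Mul in *. rewrite H, H0; auto.
  - rewrite cont_subst in *. destruct H0 as (k&?&?); exists k; rewrite <- H; auto.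
  - rewrite cont_subst in *. destruct H0 as (k&?&?); exists k; rewrite H; auto.
  - rewrite !cont_Mul in *; tauto. - rewrite !cont_Mul in *; tauto.
  - rewrite !cont_Mul in *; tauto. - rewrite !cont_Mul in *; tauto.
Qed.

Lemma cp_AC a b : AC a b -> cp a b.
Proof. intros H x; apply AC_cont; auto. Qed.

Lemma var_decomp u n : cont u n -> AC u (Var n) \/ exists r, AC u (Mul (Var n) r).
Proof.
  intro H. destruct (classic (exists x, cnt (Var n) x < cnt u x)) as [Hs|Hs].
  - right. apply decomp; auto. intro x; simpl. destruct (Nat.eqb_spec n x); subst; unfold cont in H; lia.
  - left. intro x. destruct (Nat.eqb_spec n x); subst; simpl.
    + rewrite Nat.eqb_refl. assert (~ (1 < cnt u x)) by (intro; apply Hs; exists x; simpl; rewrite Nat.eqb_refl; auto).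
      unfold cont in H; lia.
    + assert (~ (0 < cnt u x)) by (intro; apply Hs; exists x; simpl; destruct (Nat.eqb_spec n x); auto; lia).
      destruct (Nat.eqb_spec n x); lia.
Qed.

Lemma absorb_sl E : is_com_theory E -> E (Mul x0 x0) x0 ->
  forall v u, (forall x, cont v x -> cont u x) -> E u (Mul u v).
Proof.
  intros HE Hg. assert (Hid : forall n, E (Mul (Var n) (Var n)) (Var n)).
  { intro n. apply (ct_sub _ HE _ _ (fun _ => Var n)) in Hg. exact Hg. }
  induction v; intros u Hc.
  - assert (cont u n) by (apply Hc, cont_Var; auto).
    destruct (var_decomp u n H) as [H1|(r&H1)].
    + etr (Var n); [apply ct_AC; auto|]. etr (Mul (Var n) (Var n)); [apply ct_sym; auto|].
      apply ct_AC; auto. intro x; simpl. rewrite H1; simpl; auto.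
    + etr (Mul (Var n) r); [apply ct_AC; auto|]. etr (Mul (Mul (Var n) (Var n)) r).
      { apply ct_mulL; auto. apply ct_sym; auto. }
      apply ct_AC; auto. intro x; simpl. rewrite H1; simpl; lia.
  - assert (E u (Mul u v1)) by (apply IHv1; intros; apply Hc, cont_Mul; auto).
    assert (E u (Mul u v2)) by (apply IHv2; intros; apply Hc, cont_Mul; auto).
    etr (Mul u v2); auto. etr (Mul (Mul u v1) v2); [apply ct_mulL; auto|].
    apply ct_AC; auto. acs.
Qed.

Lemma SL_cp a b : SL a b <-> cp a b.
Proof.
  split.
  - apply gen_min; [apply cp_ct|]. intros x y (->&->). intro z; rewrite cont_Mul; tauto.
  - intro H. assert (HE : is_com_theory SL) by apply gen_ct.
    assert (Hg : SL (Mul x0 x0) x0) by (apply gen_incl; auto).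
    etr (Mul a b); [apply absorb_sl; auto; intros; apply H; auto|].
    etr (Mul b a); [apply ct_AC; auto; acs|].
    apply ct_sym; auto. apply absorb_sl; auto. intros; apply H; auto.
Qed.

Definition nz (a b : term) : Prop := AC a b \/ (2 <= len a /\ 2 <= len b).

Lemma nz_ct : is_com_theory nz.
Proof.
  unfold nz; repeat split; intros.
  - left; apply AC_refl.
  - destruct H as [H|H]; [left; apply AC_sym|right]; tauto.
  - destruct H as [H|H], H0 as [H0|H0]; [left; eapply AC_trans; eauto|right..];
      try apply AC_len in H; try apply AC_len in H0; lia.
  - right; simpl; pose proof (len_pos a); pose proof (len_pos b); pose proof (len_pos c); pose proof (len_pos d); lia.
  - destruct H as [H|H]; [left; apply AC_subst; auto|right].
    pose proof (len_subst s a); pose proof (len_subst s b); lia.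
  - left; acs.
  - left; acs.
Qed.

Lemma E_pairs E : is_com_theory E -> E (Mul (Mul x0 x1) x2) (Mul x0 x1) ->
  forall a b c d, E (Mul a b) (Mul c d).
Proof.
  intros HE Hg a b c d.
  assert (G : forall p q r, E (Mul (Mul p q) r) (Mul p q)).
  { intros p q r. apply (ct_sub _ HE _ _ (fun k => match k with 0 => p | 1 => q | _ => r end)) in Hg. exact Hg. }
  etr (Mul (Mul a b) (Mul c d)); [apply ct_sym, G; auto|].
  etr (Mul (Mul c d) (Mul a b)); [apply ct_AC; auto; acs|]. apply G.
Qed.

Lemma ZM_nz a b : ZM a b <-> nz a b.
Proof.
  split.
  - apply gen_min; [apply nz_ct|]. intros x y [(->&->)|(->&->)]; right; simpl; lia.
  - intro H. assert (HE : is_com_theory ZM) by apply gen_ct.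
    assert (Hg : ZM (Mul (Mul x0 x1) x2) (Mul x0 x1)) by (apply gen_incl; auto).
    destruct H as [H|(Ha&Hb)]; [apply ct_AC; auto|].
    assert (K : forall u, 2 <= len u -> ZM u (Mul x0 x1)).
    { intros u Hu. destruct u as [n|u1 u2]; [simpl in Hu; lia|].
      destruct (exists_cont u1) as (p&Hp). destruct (exists_cont u2) as (q&Hq).
      destruct (classic (exists x, cnt (Mul (Var p) (Var q)) x < cnt (Mul u1 u2) x)) as [Hs|Hs].
      - destruct (decomp (Mul (Var p) (Var q)) (Mul u1 u2)) as (r&Hr); auto.
        { intro x; unfold cont in *; simpl. destruct (Nat.eqb_spec p x), (Nat.eqb_spec q x); subst; lia. }
        etr (Mul (Mul (Var p) (Var q)) r); [apply ct_AC; auto|].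
        etr (Mul (Var p) (Var q)); [|apply E_pairs; auto].
        apply (ct_sub _ HE _ _ (fun k => match k with 0 => Var p | 1 => Var q | _ => r end)) in Hg. exact Hg.
      - etr (Mul (Var p) (Var q)); [|apply E_pairs; auto].
        apply ct_AC; auto. intro x.
        assert (cnt (Mul (Var p) (Var q)) x <= cnt (Mul u1 u2) x).
        { unfold cont in *; simpl. destruct (Nat.eqb_spec p x), (Nat.eqb_spec q x); subst; lia. }
        assert (~ cnt (Mul (Var p) (Var q)) x < cnt (Mul u1 u2) x) by (intro; apply Hs; eauto). lia. }
    etr (Mul x0 x1); auto. apply ct_sym; auto.
Qed.


Definition Cond1 (A : rel) : Prop := forall Y Z L, is_com_theory Y -> is_com_theory Z -> is_com_theory L ->
  subrel Y A -> ~ subrel Z A -> subrel Y L -> (forall a b, Z a b -> A a b -> L a b) ->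
  forall a b, A a b -> vmeet Y Z a b -> L a b.

Definition Cond2 (A : rel) : Prop := forall Y Z L, is_com_theory Y -> is_com_theory Z -> is_com_theory L ->
  ~ subrel Y A -> ~ subrel Z A ->
  (forall a b, A a b -> Y a b -> L a b) -> (forall a b, Y a b -> Z a b -> L a b) ->
  (forall a b, Z a b -> A a b -> L a b) -> subrel Y L.

Lemma vmeet_ct Y Z : is_com_theory (vmeet Y Z). Proof. apply gen_ct. Qed.

Lemma vmeet_l Y Z a b : Y a b -> vmeet Y Z a b. Proof. intro; apply gen_incl; auto. Qed.
Lemma vmeet_r Y Z a b : Z a b -> vmeet Y Z a b. Proof. intro; apply gen_incl; auto. Qed.
Lemma vmeet_comm Y Z a b : vmeet Y Z a b -> vmeet Z Y a b.
Proof. apply gen_min; [apply gen_ct|]. intros x y [?|?]; [apply vmeet_r|apply vmeet_l]; auto. Qed.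
Lemma vmeet_min Y Z L : is_com_theory L -> subrel Y L -> subrel Z L -> subrel (vmeet Y Z) L.
Proof. intros HL H1 H2. apply gen_min; auto. intros x y [?|?]; auto. Qed.

Lemma vjoin_ct X Y : is_com_theory X -> is_com_theory Y -> is_com_theory (vjoin X Y).
Proof.
  intros (?&?&?&?&?&?&?) (?&?&?&?&?&?&?); unfold vjoin; repeat split; intros;
  repeat match goal with H : _ /\ _ |- _ => destruct H end; eauto.
Qed.

Lemma neutral_gen A : is_com_theory A -> Cond1 A -> Cond2 A -> neutral A.
Proof.
  intros HA C1 C2 Y Z HY HZ a b.
  set (L := vmeet (vmeet (vjoin A Y) (vjoin Y Z)) (vjoin Z A)).
  assert (HL : is_com_theory L) by apply gen_ct.
  assert (LAY : forall a b, A a b -> Y a b -> L a b).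
  { intros; apply vmeet_l, vmeet_l; split; auto. }
  assert (LYZ : forall a b, Y a b -> Z a b -> L a b).
  { intros; apply vmeet_l, vmeet_r; split; auto. }
  assert (LZA : forall a b, Z a b -> A a b -> L a b).
  { intros; apply vmeet_r; split; auto. }
  split.
  - revert a b. apply vmeet_min; [repeat apply vjoin_ct; apply gen_ct| |].
    + apply vmeet_min; [repeat apply vjoin_ct; apply gen_ct| |].
      * intros x y (H1&H2). repeat split; [apply vmeet_l|apply vmeet_l|apply vmeet_r]; auto.
      * intros x y (H1&H2). repeat split; [apply vmeet_r|apply vmeet_l|apply vmeet_l]; auto.
    + intros x y (H1&H2). repeat split; [apply vmeet_l|apply vmeet_r|apply vmeet_l]; auto.
  - unfold vjoin. intros ((H1&H2)&H3).
    destruct (classic (subrel Y A)) as [YA|YA]; destruct (classic (subrel Z A)) as [ZA|ZA].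
    + revert H2. apply vmeet_min; auto; intros x y ?; [apply LAY|apply LZA]; auto.
    + assert (A a b) by (revert H1; apply vmeet_min; auto; intros x y ?; auto).
      apply (C1 Y Z L); auto; intros x y ?; apply LAY; auto.
    + assert (A a b) by (revert H3; apply vmeet_min; auto; intros x y ?; auto).
      apply (C1 Z Y L); auto; [intros x y ?; apply LZA; auto|apply vmeet_comm; auto].
    + revert H2. apply vmeet_min; auto.
      * apply (C2 Y Z L); auto.
      * apply (C2 Z Y L); auto.
Qed.


Lemma one_side Z k b : is_com_theory Z -> Z (Var k) b -> ~ AC (Var k) b ->
  exists m, 1 <= m /\ Z x0 (pw x0 m).
Proof.
  intros HZ H Hn.
  set (s := fun j => if Nat.eqb j k then x0 else Mul x0 x0).
  assert (Hc : forall t x, cnt (subst s t) x = if Nat.eqb x 0 then 2 * len t - cnt t k else 0).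
  { induction t; intro x.
    - unfold s; simpl.
      repeat match goal with |- context [Nat.eqb ?a ?b] => destruct (Nat.eqb_spec a b) end; simpl; try lia. all: subst; simpl; try lia; destruct x; simpl; try lia; congruence.
    - simpl. rewrite IHt1, IHt2. pose proof (cnt_le_len t1 k); pose proof (cnt_le_len t2 k).
      destruct (Nat.eqb x 0); lia. }
  assert (Hge : 2 <= 2 * len b - cnt b k).
  { pose proof (cnt_le_len b k). destruct (Nat.eq_dec (len b) 1) as [E1|E1]; [|pose proof (len_pos b); lia].
    destruct (len1_var b E1) as (j & ->). simpl. destruct (Nat.eqb_spec j k); [subst; exfalso; apply Hn, AC_refl|lia]. }
  exists (2 * len b - cnt b k - 1). split; [lia|].
  apply (ct_sub _ HZ _ _ s) in H. simpl in H. unfold s at 1 in H. rewrite Nat.eqb_refl in H.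
  etr (subst s b); auto. apply ct_AC; auto. intro x. rewrite Hc, cnt_pw. simpl.
  destruct x; simpl; lia.
Qed.

Lemma Xnz A Z : (forall a b, A a b <-> nz a b) -> is_com_theory Z -> ~ subrel Z A ->
  exists m, 1 <= m /\ Z x0 (pw x0 m).
Proof.
  intros HA HZ Hn. apply not_all_ex_not in Hn as (a & Hn). apply not_all_ex_not in Hn as (b & Hn).
  apply imply_to_and in Hn as (H1 & H2). rewrite HA in H2. unfold nz in H2.
  apply not_or_and in H2 as (H2 & H3).
  destruct (Nat.eq_dec (len a) 1) as [E1|E1].
  - destruct (len1_var a E1) as (k & ->). eapply one_side; eauto.
  - assert (len b = 1) by (pose proof (len_pos a); pose proof (len_pos b); lia).
    destruct (len1_var b H) as (k & ->). apply (one_side Z k a); auto; [apply ct_sym; auto|].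
    intro; apply H2, AC_sym; auto.
Qed.

Lemma iterX E m : is_com_theory E -> 1 <= m -> E x0 (pw x0 m) -> forall k t, E t (pw t (k * m)).
Proof.
  intros HE Hm H k t.
  assert (H1 : E x0 (Mul x0 (pw x0 (m - 1)))) by (etr (pw x0 m); auto; apply ct_AC; auto; acs).
  pose proof (iter_mulp E HE _ _ H1 k) as H2.
  apply (ct_sub _ HE _ _ (fun _ => t)) in H2. rewrite subst_mulp, subst_pw in H2. simpl in H2.
  etr (mulp t (pw t (m - 1)) k); auto. apply ct_AC; auto. acs.
Qed.

Lemma powsubst tau m t : AC (subst (fun k => pw (tau k) m) t) (pw (subst tau t) m).
Proof.
  induction t; simpl; [apply AC_refl|]. intro x; simpl. rewrite IHt1, IHt2, !cnt_pw. simpl. nia.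
Qed.

Lemma len_subst2 s a : (forall k, 2 <= len (s k)) -> 2 <= len (subst s a).
Proof. intro H; induction a; simpl; auto. lia. Qed.

Lemma Cond2_nz A : (forall a b, A a b <-> nz a b) -> Cond2 A.
Proof.
  intros HA Y Z L HY HZ HL nY nZ LAY LYZ LZA a b H.
  destruct (Xnz A Y HA HY nY) as (m1 & Hm1 & X1).
  destruct (Xnz A Z HA HZ nZ) as (m2 & Hm2 & X2).
  set (M := m2 * m1).
  assert (HM : forall t, L t (pw t M)).
  { intro t. apply LYZ; [apply (iterX Y m1); auto|]. unfold M; rewrite Nat.mul_comm. apply (iterX Z m2); auto. }
  etr (pw a M); auto. etr (pw b M); [|apply ct_sym; auto].
  apply LAY; [|apply E_pw; auto]. apply HA. right. rewrite !len_pw. pose proof (len_pos a); pose proof (len_pos b).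
  unfold M; nia.
Qed.

Lemma Cond1_nz A : (forall a b, A a b <-> nz a b) -> Cond1 A.
Proof.
  intros HA Y Z L HY HZ HL YA nZ YL ZAL a b Hab Hm.
  destruct (Xnz A Z HA HZ nZ) as (m & Hm1 & X).
  set (R := fun a b => forall tau, L (subst (fun k => pw (tau k) m) a) (subst (fun k => pw (tau k) m) b)).
  assert (HR : is_com_theory R).
  { unfold R; repeat split; intros.
    - apply ct_refl; auto.
    - apply ct_sym; auto.
    - eapply ct_trans; eauto.
    - simpl; apply ct_mul; auto.
    - rewrite !subst_comp.
      etr (subst (fun k => pw (subst tau (s k)) m) a0); [apply ct_AC; auto; apply AC_subst_pt; intro; apply powsubst|].
      etr (subst (fun k => pw (subst tau (s k)) m) b0); [apply (H (fun k => subst tau (s k)))|].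
      apply ct_AC; auto; apply AC_subst_pt; intro; apply AC_sym, powsubst.
    - simpl; apply ct_AC; auto; acs.
    - simpl; apply ct_AC; auto; acs. }
  assert (HYZ : subrel (vmeet Y Z) R).
  { apply vmeet_min; auto.
    - intros x y H tau; apply YL, ct_sub; auto.
    - intros x y H tau. apply ZAL; [apply ct_sub; auto|]. apply HA; right.
      split; apply len_subst2; intro k; rewrite len_pw; pose proof (len_pos (tau k)); nia. }
  apply HA in Hab. destruct Hab as [Hab|(La&Lb)]; [apply ct_AC; auto|].
  assert (Hp : forall t, 2 <= len t -> L t (subst (fun k => pw (Var k) m) t)).
  { intros t Ht. etr (pw t m).
    - apply ZAL.
      + apply (ct_sub _ HZ _ _ (fun _ => t)) in X. rewrite subst_pw in X. exact X.
      + apply HA; right; rewrite len_pw; nia.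
    - apply ct_AC; auto. pose proof (powsubst Var m t) as P. rewrite subst_id in P. apply AC_sym; auto. }
  etr (subst (fun k => pw (Var k) m) a); auto. etr (subst (fun k => pw (Var k) m) b); [apply HYZ; auto|].
  apply ct_sym; auto.
Qed.


Definition K (E : rel) (n : nat) : Prop := E (pw x0 n) (Mul (pw x0 n) (pw x1 n)).

Lemma K_use E n : is_com_theory E -> K E n -> forall p q, E (pw p n) (Mul (pw p n) (pw q n)).
Proof.
  intros HE H p q. apply (ct_sub _ HE _ _ (fun k => match k with 0 => p | _ => q end)) in H.
  simpl in H. rewrite !subst_pw in H. exact H.
Qed.

Lemma K_lift E n j : is_com_theory E -> K E n -> K E (S n * S j - 1).
Proof.
  intros HE H. pose proof (K_use E n HE H (pw x0 j) (pw x1 j)) as H1. unfold K.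
  etr (pw (pw x0 j) n); [apply ct_AC; auto; acs|]. etr (Mul (pw (pw x0 j) n) (pw (pw x1 j) n)); auto.
  apply ct_AC; auto. unfold AC; intro x; simpl; rewrite !cnt_pw. nia.
Qed.

Lemma len_two t p q : p <> q -> (forall k, k <> p -> k <> q -> cnt t k = 0) -> len t = cnt t p + cnt t q.
Proof.
  intros Hpq; induction t; simpl; intros H.
  - destruct (Nat.eqb_spec n p), (Nat.eqb_spec n q); subst; try lia. specialize (H n n0 n1).
    rewrite Nat.eqb_refl in H; lia.
  - rewrite IHt1, IHt2; [lia| |]; intros k H1 H2; specialize (H k H1 H2); lia.
Qed.

Ltac eqbs := repeat match goal with |- context [Nat.eqb ?a ?b] => destruct (Nat.eqb_spec a b) end.

Lemma Kcp Y a b n : is_com_theory Y -> Y a b -> cont b n -> ~ cont a n -> exists N, K Y N.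
Proof.
  intros HY H Hb Ha. unfold cont in Ha, Hb.
  set (sg := fun k => if Nat.eqb k n then x1 else x0).
  assert (Csg : forall u x, cnt (subst sg u) x =
     if Nat.eqb x 1 then cnt u n else if Nat.eqb x 0 then len u - cnt u n else 0).
  { induction u; intro x; simpl.
    - unfold sg; simpl. destruct (Nat.eqb_spec n0 n); simpl; destruct x as [|[|x]]; simpl; try lia; eqbs; lia.
    - rewrite IHu1, IHu2. pose proof (cnt_le_len u1 n); pose proof (cnt_le_len u2 n).
      destruct x as [|[|x]]; simpl; lia. }
  set (s := subst sg a). set (t := subst sg b).
  set (al := len a). set (c := cnt b n).
  assert (Hs : forall x, cnt s x = if Nat.eqb x 0 then al else 0).
  { intro x; unfold s; rewrite Csg. destruct x as [|[|x]]; simpl; unfold al; lia. }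
  assert (Hal : 1 <= al) by apply len_pos.
  assert (Ht : forall x, cnt t x = if Nat.eqb x 0 then len b - c else if Nat.eqb x 1 then c else 0).
  { intro x; unfold t; rewrite Csg. destruct x as [|[|x]]; simpl; unfold c; lia. }
  assert (H1 : Y s t) by (apply ct_sub; auto).
  set (rho := fun k => if Nat.eqb k 1 then Mul s x1 else Var k).
  assert (Crho : forall u x, cnt (subst rho u) x = cnt u x + cnt u 1 * cnt s x).
  { induction u; intro x; simpl.
    - unfold rho; destruct (Nat.eqb_spec n0 1); subst; simpl; eqbs; lia.
    - rewrite IHu1, IHu2; lia. }
  assert (H2 : Y s (subst rho t)).
  { etr (subst rho s); [apply ct_AC; auto; intro x; rewrite Crho, !Hs; simpl; lia|]. apply ct_sub; auto. }
  destruct (decomp s (subst rho t)) as (z & Hz).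
  { intro x; rewrite Crho, !Ht, !Hs. destruct x as [|[|x]]; simpl; nia. }
  { exists 1. rewrite Crho, !Ht, !Hs. simpl; lia. }
  set (ga := len b - c + (c - 1) * al).
  assert (Cz : forall x, cnt z x = if Nat.eqb x 0 then ga else if Nat.eqb x 1 then c else 0).
  { intro x. specialize (Hz x). simpl in Hz. rewrite Crho, !Ht, !Hs in Hz. unfold ga.
    destruct x as [|[|x]]; simpl in *; nia. }
  assert (H3 : Y s (Mul s z)) by (etr (subst rho t); auto; apply ct_AC; auto).
  set (w := subst (fun _ => x0) z).
  assert (Lz : len z = ga + c).
  { rewrite (len_two z 0 1); [rewrite !Cz; simpl; auto|auto|]. intros k H4 H5; rewrite Cz; eqbs; lia. }
  set (f := ga + c).
  assert (C0 : forall u x, cnt (subst (fun _ => x0) u) x = if Nat.eqb x 0 then len u else 0).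
  { induction u; intro x; simpl; [destruct x; simpl; auto|rewrite IHu1, IHu2; destruct (Nat.eqb x 0); lia]. }
  assert (Cw : forall x, cnt w x = if Nat.eqb x 0 then f else 0).
  { intro x; unfold w; rewrite C0, Lz; auto. }
  assert (Ls : len s = al).
  { rewrite <- (cnt_only s 0); [rewrite Hs; auto|]. intros k Hk; rewrite Hs; eqbs; lia. }
  assert (As : AC (subst (fun _ => x0) s) s).
  { intro x; rewrite C0, !Hs, Ls; auto. }
  assert (H4 : Y s (Mul s w)).
  { apply (ct_sub _ HY _ _ (fun _ => x0)) in H3. simpl in H3.
    etr (subst (fun _ => x0) s); [apply ct_AC; auto; apply AC_sym; auto|].
    etr (Mul (subst (fun _ => x0) s) w); auto. apply ct_AC; auto. intro x; simpl; rewrite As; auto. }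
  assert (Hf : 1 <= f) by (unfold f; lia).
  set (X1 := pw x1 (f * c - 1)).
  assert (H5 : Y s (Mul s X1)).
  { etr (mulp s z f); [apply iter_mulp; auto|].
    etr (Mul (mulp s w ga) X1).
    - apply ct_AC; auto. intro x. unfold X1; simpl; rewrite !cnt_mulp, cnt_pw, !Cz, !Cw, !Hs.
      destruct x as [|[|x]]; simpl; nia.
    - apply ct_mulL; auto. apply ct_sym; auto. apply iter_mulp; auto. }
  exists (al * f * c - 1). unfold K.
  etr (mulp s s (f * c - 1)); [apply ct_AC; auto; intro x; rewrite cnt_pw, cnt_mulp, !Hs; destruct x; simpl; nia|].
  etr (mulp (mulp s X1 al) s (f * c - 1)); [apply E_mulp; auto; apply iter_mulp; auto|].
  apply ct_AC; auto. intro x; simpl; rewrite !cnt_mulp, !cnt_pw, !Hs. unfold X1; rewrite cnt_pw.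
  destruct x as [|[|x]]; simpl; nia.
Qed.

Lemma newvar Z s t m : is_com_theory Z -> Z s t -> cont t m -> ~ cont s m ->
  exists q, (forall x, cont q x -> cont s x) /\ Z s (Mul s q).
Proof.
  intros HZ H Ht Hs.
  set (tau := fun k => if cont_dec s k then Var k else Mul s s).
  assert (Es : subst tau s = s).
  { rewrite <- (subst_id s) at 2. apply subst_ext. intros k Hk. unfold tau. destruct (cont_dec s k); tauto. }
  assert (Hge : forall u, cont u m -> forall x, cnt (tau m) x <= cnt (subst tau u) x).
  { induction u; intros Hu x; simpl.
    - apply cont_Var in Hu; subst; auto.
    - apply cont_Mul in Hu as [Hu|Hu]; [specialize (IHu1 Hu x)|specialize (IHu2 Hu x)]; lia. }
  assert (Htm : tau m = Mul s s) by (unfold tau; destruct (cont_dec s m); tauto).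
  destruct (decomp s (subst tau t)) as (q & Hq).
  { intro x; specialize (Hge t Ht x); rewrite Htm in Hge; simpl in Hge; lia. }
  { destruct (exists_cont s) as (x & Hx). exists x. specialize (Hge t Ht x); rewrite Htm in Hge; simpl in Hge.
    unfold cont in Hx; lia. }
  exists q. split.
  - intros x Hx. assert (cont (subst tau t) x) by (unfold cont in *; rewrite Hq; simpl; lia).
    apply cont_subst in H0 as (k & _ & Hk). unfold tau in Hk. destruct (cont_dec s k).
    + apply cont_Var in Hk; subst; auto.
    + apply cont_Mul in Hk; tauto.
  - etr (subst tau t); [rewrite <- Es at 1; apply ct_sub; auto|]. apply ct_AC; auto.
Qed.

Lemma noncp a b : ~ cp a b -> (exists n, cont b n /\ ~ cont a n) \/ (exists n, cont a n /\ ~ cont b n).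
Proof.
  intro H. apply NNPP; intro H'. apply H. intro x. apply not_or_and in H' as (H1 & H2).
  split; intro Hx; apply NNPP; intro Hy; [apply H2|apply H1]; eauto.
Qed.

Lemma K_of A Y : (forall a b, A a b <-> cp a b) -> is_com_theory Y -> ~ subrel Y A -> exists N, K Y N.
Proof.
  intros HA HY Hn. apply not_all_ex_not in Hn as (a & Hn). apply not_all_ex_not in Hn as (b & Hn).
  apply imply_to_and in Hn as (H1 & H2). rewrite HA in H2.
  destruct (noncp a b H2) as [(n&?&?)|(n&?&?)]; [eapply Kcp; eauto|].
  apply (Kcp Y b a n); auto. apply ct_sym; auto.
Qed.


Lemma step_cp Y E N a b n : is_com_theory Y -> is_com_theory E ->
  (forall x y, cp x y -> Y x y -> E x y) -> K E N -> Y a b -> cont b n -> ~ cont a n ->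
  E a (Mul a (pw (Mul a b) N)).
Proof.
  intros HY HE CY KE H Hb Ha.
  destruct (newvar Y a b n HY H Hb Ha) as (q & Hq & H1).
  assert (H2 : Y a (Mul a (pw q N))) by (apply iter_pw; auto).
  assert (E a (Mul a (pw q N))).
  { apply CY; auto. intro x; rewrite cont_Mul, cont_pw. split; [tauto|intros [?|?]; auto]. }
  etr (Mul a (pw q N)); auto.
  etr (Mul a (Mul (pw q N) (pw (Mul a b) N))); [apply ct_mulR; auto; apply K_use; auto|].
  apply CY.
  - intro x; rewrite !cont_Mul, !cont_pw, !cont_Mul. split; [intros [?|[?|?]]; auto|intros [?|?]; auto].
  - etr (Mul (Mul a (pw q N)) (pw (Mul a b) N)); [apply ct_AC; auto; acs|]. apply ct_mulL; auto. apply ct_sym; auto.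
Qed.

Lemma Cond2_cp A : (forall a b, A a b <-> cp a b) -> Cond2 A.
Proof.
  intros HA Y Z L HY HZ HL nY nZ LAY LYZ LZA.
  destruct (K_of A Y HA HY nY) as (n1 & K1). destruct (K_of A Z HA HZ nZ) as (n2 & K2).
  set (N := S n1 * S n2 - 1).
  assert (KY : K Y N) by (apply K_lift; auto).
  assert (KZ : K Z N) by (unfold N; rewrite Nat.mul_comm; apply K_lift; auto).
  assert (KL : K L N) by (apply LYZ; [exact KY|exact KZ]).
  assert (CL : forall x y, cp x y -> Y x y -> L x y) by (intros; apply LAY; auto; apply HA; auto).
  assert (P1 : forall a b, Y a b -> (exists n, cont b n /\ ~ cont a n) -> L a b).
  { intros a b H (n & Hb & Ha).
    assert (L1 : L a (Mul a (pw (Mul a b) N))) by (apply (step_cp Y L N a b n); auto).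
    assert (L2 : L (Mul a (pw (Mul a b) N)) (Mul b (pw (Mul a b) N))).
    { apply CL; [|apply ct_mulL; auto]. intro x; rewrite !cont_Mul, !cont_pw, !cont_Mul; tauto. }
    etr (Mul a (pw (Mul a b) N)); auto. etr (Mul b (pw (Mul a b) N)); auto.
    destruct (classic (exists m, cont a m /\ ~ cont b m)) as [(m & Ha' & Hb')|Hn].
    - etr (Mul b (pw (Mul b a) N)); [apply ct_AC; auto; acs|]. apply ct_sym; auto.
      apply (step_cp Y L N b a m); auto. apply ct_sym; auto.
    - apply ct_sym; auto. apply CL.
      + intro x; rewrite !cont_Mul, !cont_pw, !cont_Mul. split; [auto|].
        intros [?|[?|?]]; auto. apply NNPP; intro; apply Hn; eauto.
      + etr a; [apply ct_sym; auto|]. etr (Mul a (pw (Mul a b) N)); [apply (step_cp Y Y N a b n); auto|].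
        apply ct_mulL; auto. }
  intros a b H. destruct (classic (cp a b)) as [Hc|Hc]; [apply CL; auto|].
  destruct (noncp a b Hc) as [?|(n&?&?)]; [apply P1; auto|].
  apply ct_sym; auto. apply P1; [apply ct_sym; auto|eauto].
Qed.


Lemma Cond1_cp A : (forall a b, A a b <-> cp a b) -> Cond1 A.
Proof.
  intros HA Y Z L HY HZ HL YA nZ YL ZAL a b Hab Hm.
  destruct (K_of A Z HA HZ nZ) as (N & KZ).
  set (G := gen (fun x y => Y x y \/ (Z x y /\ cp x y))).
  assert (HG : is_com_theory G) by apply gen_ct.
  assert (GL : subrel G L).
  { apply gen_min; auto. intros x y [?|(?&?)]; auto. apply ZAL; auto; apply HA; auto. }
  assert (Gcp : subrel G cp).
  { apply gen_min; [apply cp_ct|]. intros x y [?|(?&?)]; auto. apply HA, YA; auto. }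
  assert (GY : forall x y, Y x y -> G x y) by (intros; apply gen_incl; auto).
  assert (GZ : forall x y, Z x y -> cp x y -> G x y) by (intros; apply gen_incl; auto).
  set (ab := fun s => exists q, (forall x, cont q x -> cont s x) /\ G s (Mul s (pw q N))).
  assert (abG : forall s t, G s t -> ab s -> ab t).
  { intros s t H (q & Hq & H1). exists q. split; [intros x Hx; apply (Gcp s t H); auto|].
    etr s; [apply ct_sym; auto|]. etr (Mul s (pw q N)); auto. apply ct_mulL; auto. }
  assert (abM : forall s r, ab s -> ab (Mul s r) /\ ab (Mul r s)).
  { intros s r (q & Hq & H1). split; exists q; (split; [intros x Hx; apply cont_Mul; auto|]).
    - etr (Mul (Mul s (pw q N)) r); [apply ct_mulL; auto|apply ct_AC; auto; acs].
    - etr (Mul r (Mul s (pw q N))); [apply ct_mulR; auto|apply ct_AC; auto; acs]. }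
  assert (absZ : forall s q, (forall x, cont q x -> cont s x) -> Z s (Mul s q) -> ab s).
  { intros s q Hq H. exists q. split; auto. apply GZ; [apply iter_pw; auto|].
    intro x; rewrite cont_Mul, cont_pw; split; [auto|intros [?|?]; auto]. }
  assert (Zab1 : forall s t, Z s t -> (exists m, cont t m /\ ~ cont s m) -> ab s /\ ab t).
  { intros s t H (m & Ht & Hs). destruct (newvar Z s t m HZ H Ht Hs) as (q & Hq & H1).
    split; [eapply absZ; eauto|].
    destruct (classic (exists m', cont s m' /\ ~ cont t m')) as [(m'&?&?)|Hn].
    - destruct (newvar Z t s m' HZ (ct_sym _ HZ _ _ H)) as (q' & ? & ?); auto. eapply absZ; eauto.
    - apply (absZ t q).
      + intros x Hx. apply NNPP; intro; apply Hn; eauto.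
      + etr s; [apply ct_sym; auto|]. etr (Mul s q); auto. apply ct_mulL; auto. }
  assert (Zab : forall s t, Z s t -> ~ cp s t -> ab s /\ ab t).
  { intros s t H Hc. destruct (noncp s t Hc) as [?|(m&?&?)]; [apply Zab1; auto|].
    destruct (Zab1 t s) as (?&?); eauto. apply ct_sym; auto. }
  set (C := cont a).
  set (R1 := fun x y => forall sg, (forall k z, cont (sg k) z -> C z) -> forall w, (forall z, cont w z <-> C z) ->
     G (Mul (subst sg x) w) (Mul (subst sg y) w)).
  assert (HR1 : is_com_theory R1).
  { unfold R1; repeat split; intros.
    - apply ct_refl; auto.
    - apply ct_sym; auto.
    - eapply ct_trans; eauto.
    - assert (W1 : forall u, forall z, cont (Mul (subst sg u) w) z <-> C z).
      { intros u z; rewrite cont_Mul, cont_subst. split; [intros [(k&?&?)|?]; eauto; apply H2; auto|]. 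
        intro; right; apply H2; auto. }
      simpl. etr (Mul (subst sg a0) (Mul (subst sg c) w)); [apply ct_AC; auto; acs|].
      etr (Mul (subst sg b0) (Mul (subst sg c) w)); [apply H; auto|].
      etr (Mul (subst sg c) (Mul (subst sg b0) w)); [apply ct_AC; auto; acs|].
      etr (Mul (subst sg d) (Mul (subst sg b0) w)); [apply H0; auto|]. apply ct_AC; auto; acs.
    - rewrite !subst_comp. apply H; auto. intros k z Hz. apply cont_subst in Hz as (j & ? & ?). eauto.
    - simpl; apply ct_AC; auto; acs.
    - simpl; apply ct_AC; auto; acs. }
  set (R2 := fun x y => forall sg, G (subst sg x) (subst sg y) \/ (ab (subst sg x) /\ ab (subst sg y))).
  assert (HR2 : is_com_theory R2).
  { unfold R2; repeat split; intros.
    - left; apply ct_refl; auto.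
    - destruct (H sg) as [?|(?&?)]; [left; apply ct_sym|right]; auto.
    - destruct (H sg) as [?|(?&?)], (H0 sg) as [?|(?&?)].
      + left; eapply ct_trans; eauto.
      + right; split; auto. apply (abG (subst sg b0)); auto. apply ct_sym; auto.
      + right; split; auto. apply (abG (subst sg b0)); auto.
      + right; auto.
    - simpl. destruct (H sg) as [?|(?&?)], (H0 sg) as [?|(?&?)].
      + left; apply ct_mul; auto.
      + right; split; [apply (proj2 (abM (subst sg c) (subst sg a0) H2))|apply (proj2 (abM (subst sg d) (subst sg b0) H3))].
      + right; split; [apply (proj1 (abM (subst sg a0) (subst sg c) H1))|apply (proj1 (abM (subst sg b0) (subst sg d) H2))].
      + right; split; [apply (proj1 (abM (subst sg a0) (subst sg c) H1))|apply (proj1 (abM (subst sg b0) (subst sg d) H2))].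
    - rewrite !subst_comp. apply H.
    - left; simpl; apply ct_AC; auto; acs.
    - left; simpl; apply ct_AC; auto; acs. }
  assert (S1 : R1 a b).
  { revert Hm. apply vmeet_min; auto.
    - intros x y H sg Hs w Hw. apply GY. apply ct_mulL; auto. apply ct_sub; auto.
    - intros x y H sg Hs w Hw. apply GZ; [apply ct_mulL; auto; apply ct_sub; auto|].
      intro z. rewrite !cont_Mul, !cont_subst. split; intros [(k&?&?)|?]; right; auto;
      apply Hw; eauto. }
  assert (S2 : R2 a b).
  { revert Hm. apply vmeet_min; auto.
    - intros x y H sg. left. apply GY, ct_sub; auto.
    - intros x y H sg. destruct (classic (cp (subst sg x) (subst sg y))) as [Hc|Hc].
      + left; apply GZ; auto; apply ct_sub; auto.
      + right; apply Zab; auto; apply ct_sub; auto. }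
  apply HA in Hab.
  set (sg0 := fun k => if cont_dec a k then Var k else a).
  assert (Hsg0 : forall k z, cont (sg0 k) z -> C z).
  { intros k z. unfold sg0; destruct (cont_dec a k); auto. intro H; apply cont_Var in H; subst; auto. }
  assert (Ea : subst sg0 a = a).
  { rewrite <- (subst_id a) at 2. apply subst_ext. intros k Hk. unfold sg0. destruct (cont_dec a k); tauto. }
  assert (Eb : subst sg0 b = b).
  { rewrite <- (subst_id b) at 2. apply subst_ext. intros k Hk. unfold sg0. destruct (cont_dec a k); auto.
    exfalso; apply n, Hab; auto. }
  apply GL. destruct (S2 sg0) as [H|(Ha & Hb)]; [rewrite Ea, Eb in H; auto|].
  rewrite Ea in Ha; rewrite Eb in Hb.
  destruct Ha as (q1 & Hq1 & Ha). destruct Hb as (q2 & Hq2 & Hb).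
  assert (St : forall s q r, (forall x, cont q x -> cont s x) -> (forall x, cont r x -> cont s x) ->
     G s (Mul s (pw q N)) -> G s (Mul s (Mul (pw q N) (pw r N)))).
  { intros s q r Hq Hr H. etr (Mul s (pw q N)); auto. apply GZ.
    - apply ct_mulR; auto. apply K_use; auto.
    - intro x; rewrite !cont_Mul, !cont_pw. split; [intros [?|?]; auto|intros [?|[?|?]]; auto]. }
  set (X := Mul (pw q1 N) (pw (Mul q2 a) N)).
  assert (G1 : G a (Mul a X)).
  { apply St; auto. intros x Hx; apply cont_Mul in Hx as [?|?]; auto. apply Hab; auto. }
  assert (G2 : G b (Mul b (Mul (pw q2 N) (pw (Mul q1 a) N)))).
  { apply St; auto. intros x Hx; apply Hab; apply cont_Mul in Hx as [?|?]; auto. }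
  etr (Mul a X); auto. etr (Mul b X).
  - specialize (S1 sg0 Hsg0 X). rewrite Ea, Eb in S1. apply S1.
    intro z. unfold X; rewrite !cont_Mul, !cont_pw, !cont_Mul. split; [|auto].
    unfold C; intros [Hz|[Hz|Hz]]; [apply Hq1; auto|apply Hab, Hq2; auto|auto].
  - etr (Mul b (Mul (pw q2 N) (pw (Mul q1 a) N))); [apply ct_AC; auto; unfold X; acs|]. apply ct_sym; auto.
Qed.


Definition Ty (a b : term) : Prop := AC a b \/ (4 <= len a /\ 4 <= len b).
Definition Tz (a b : term) : Prop := Ty a b \/ (len a = 3 /\ len b = 3 /\ cp a b).

Lemma Ty_ct : is_com_theory Ty.
Proof.
  unfold Ty; repeat split; intros.
  - left; apply AC_refl.
  - destruct H as [H|H]; [left; apply AC_sym|right]; tauto.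
  - destruct H as [H|H], H0 as [H0|H0]; [left; eapply AC_trans; eauto|right..];
      try apply AC_len in H; try apply AC_len in H0; lia.
  - destruct H as [H|H], H0 as [H0|H0].
    + left; intro x; simpl; rewrite H, H0; auto.
    + right; apply AC_len in H; simpl; lia.
    + right; apply AC_len in H0; simpl; lia.
    + right; simpl; lia.
  - destruct H as [H|H]; [left; apply AC_subst; auto|right].
    pose proof (len_subst s a); pose proof (len_subst s b); lia.
  - left; acs.
  - left; acs.
Qed.

Lemma len_subst_eq s a : (forall k, cont a k -> len (s k) = 1) -> len (subst s a) = len a.
Proof.
  induction a; simpl; intro H; [apply H, cont_Var; auto|].
  rewrite IHa1, IHa2; auto; intros k Hk; apply H, cont_Mul; auto.
Qed.

Lemma len_subst_gt s a k : cont a k -> 2 <= len (s k) -> len a + 1 <= len (subst s a).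
Proof.
  induction a; simpl; intros Hk H.
  - apply cont_Var in Hk; subst; lia.
  - pose proof (len_subst s a1); pose proof (len_subst s a2).
    apply cont_Mul in Hk as [Hk|Hk]; [specialize (IHa1 Hk H)|specialize (IHa2 Hk H)]; lia.
Qed.

Lemma Tz_ct : is_com_theory Tz.
Proof.
  pose proof Ty_ct as HT. pose proof cp_ct as HC. unfold Tz; repeat split; intros.
  - left; apply ct_refl; auto.
  - destruct H as [H|H]; [left; apply ct_sym; auto|right]. destruct H as (?&?&?); refine (conj _ (conj _ _)); auto. apply (ct_sym _ HC); auto.
  - destruct H as [H|(H1&H2&H3)], H0 as [H0|(H4&H5&H6)].
    + left; eapply ct_trans; eauto.
    + destruct H as [H|H]; [|lia]. right. pose proof H as Hac. apply AC_len in H. refine (conj _ (conj _ _)); try lia.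
      apply (ct_trans _ HC _ b); auto. apply cp_AC; auto.
    + destruct H0 as [H0|H0]; [|lia]. right. pose proof H0 as Hac. apply AC_len in H0. refine (conj _ (conj _ _)); try lia.
      apply (ct_trans _ HC _ b); auto. apply cp_AC; auto.
    + right; refine (conj _ (conj _ _)); auto. apply (ct_trans _ HC _ b); auto.
  - destruct H as [H|H], H0 as [H0|H0].
    + left; apply ct_mul; auto.
    + left; right; simpl; destruct H0 as (?&?&?); pose proof (len_pos a); pose proof (len_pos b); lia.
    + left; right; simpl; destruct H as (?&?&?); pose proof (len_pos c); pose proof (len_pos d); lia.
    + left; right; simpl; destruct H as (?&?&?); lia.
  - destruct H as [H|(H1&H2&H3)]; [left; apply ct_sub; auto|].
    destruct (classic (exists k, cont a k /\ 2 <= len (s k))) as [(k&Hk&Hl)|Hn].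
    + left; right. pose proof (len_subst_gt s a k Hk Hl).
      assert (cont b k) by (apply H3; auto). pose proof (len_subst_gt s b k H0 Hl). lia.
    + right. assert (Hs : forall k, cont a k -> len (s k) = 1).
      { intros k Hk. pose proof (len_pos (s k)). destruct (Nat.eq_dec (len (s k)) 1); auto. exfalso; apply Hn; exists k; split; auto; lia. }
      rewrite !len_subst_eq; auto; [refine (conj _ (conj _ _)); auto; apply (ct_sub _ HC); auto|]. intros k Hk; apply Hs, H3; auto.
  - left; left; acs.
  - left; left; acs.
Qed.

Definition eL := Mul (Mul x0 x0) x1.
Definition eR := Mul (Mul x0 x1) x1.


Lemma e_from V a b : is_com_theory V -> V a b -> len a = 3 -> len b = 3 -> cp a b -> ~ AC a b -> V eL eR.
Proof.
  intros HV H La Lb Hc Hn.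
  assert (Hp : exists p, cnt a p <> cnt b p).
  { apply NNPP; intro H'. apply Hn. intro x. apply NNPP; intro; apply H'; eauto. }
  destruct Hp as (p & Hp).
  pose proof (cnt_le_len a p); pose proof (cnt_le_len b p).
  assert (Hpos : 0 < cnt a p /\ 0 < cnt b p).
  { specialize (Hc p); unfold cont in Hc. lia. }
  assert (N3 : forall u v, len u = 3 -> len v = 3 -> cp u v -> cnt u p = 3 -> cnt v p = 3).
  { intros u v Lu Lv Huv E3. rewrite <- Lv. apply cnt_only. intros k Hk.
    assert (Hnc : ~ cont u k) by (unfold cont; pose proof (cnt_two u p k); lia).
    destruct (Nat.eq_dec (cnt v k) 0); auto. exfalso; apply Hnc, Huv; unfold cont; lia. }
  assert (cnt a p <> 3) by (intro E3; apply Hp; rewrite E3; symmetry; apply (N3 a b); auto).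
  assert (cnt b p <> 3).
  { intro E3; apply Hp; rewrite E3; apply (N3 b a); auto. apply ct_sym; auto; apply cp_ct. }
  set (sg := fun k => if Nat.eqb k p then x0 else x1).
  assert (Cs : forall u x, cnt (subst sg u) x = if Nat.eqb x 0 then cnt u p else if Nat.eqb x 1 then len u - cnt u p else 0).
  { induction u; intro x; simpl.
    - unfold sg; destruct (Nat.eqb_spec n p); simpl; destruct x as [|[|x]]; simpl; eqbs; lia.
    - rewrite IHu1, IHu2. pose proof (cnt_le_len u1 p); pose proof (cnt_le_len u2 p).
      destruct x as [|[|x]]; simpl; lia. }
  apply (ct_sub _ HV _ _ sg) in H.
  assert (cnt a p = 2 /\ cnt b p = 1 \/ cnt a p = 1 /\ cnt b p = 2) as [(E1&E2)|(E1&E2)] by lia.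
  - etr (subst sg a); [apply ct_AC; auto; intro x; rewrite Cs; destruct x as [|[|x]]; simpl; lia|].
    etr (subst sg b); auto. apply ct_AC; auto; intro x; rewrite Cs; destruct x as [|[|x]]; simpl; lia.
  - idtac.
    etr (subst sg b); [apply ct_AC; auto; intro x; rewrite Cs; destruct x as [|[|x]]; simpl; lia|].
    etr (subst sg a); [apply ct_sym; auto|]. apply ct_AC; auto; intro x; rewrite Cs; destruct x as [|[|x]]; simpl; lia.
Qed.

Lemma full_of V : is_com_theory V -> V x0 x1 -> releq V full.
Proof.
  intros HV H a b; split; [constructor|intros _].
  apply (ct_sub _ HV _ _ (fun k => match k with 0 => a | _ => b end)) in H. exact H.
Qed.

Lemma SL_atom V : is_com_theory V -> subrel SL V -> ~ releq V full -> releq V SL.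
Proof.
  intros HV HS Hf.
  assert (CV : forall a b, cp a b -> V a b) by (intros; apply HS, SL_cp; auto).
  assert (Vcp : subrel V cp).
  { intros a b H. apply NNPP; intro Hc. apply Hf.
    assert (G : forall a b n, V a b -> cont b n -> ~ cont a n -> V x0 x1).
    { clear a b H Hc. intros a b n H Hb Ha.
      assert (T : forall i j, i <> j -> V (Var i) (Mul (Var i) (Var j)) \/ V (Var i) (Var j)).
      { intros i j Hij. set (sg := fun k => if Nat.eqb k n then Var j else Var i).
        apply (ct_sub _ HV _ _ sg) in H.
        assert (A1 : cp (subst sg a) (Var i)).
        { intro x; rewrite cont_subst, cont_Var. split.
          - intros (k & Hk & Hx). unfold sg in Hx. destruct (Nat.eqb_spec k n); [subst; tauto|apply cont_Var in Hx; auto].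
          - intros <-. destruct (exists_cont a) as (k & Hk). exists k; split; auto. unfold sg.
            destruct (Nat.eqb_spec k n); [subst; tauto|apply cont_Var; auto]. }
        assert (Hj : cont (subst sg b) j) by (apply cont_subst; exists n; split; auto; unfold sg; rewrite Nat.eqb_refl; apply cont_Var; auto).
        assert (Hsub : forall x, cont (subst sg b) x -> x = i \/ x = j).
        { intros x Hx. apply cont_subst in Hx as (k & _ & Hx). unfold sg in Hx. destruct (Nat.eqb k n); apply cont_Var in Hx; auto. }
        destruct (classic (cont (subst sg b) i)) as [Hi|Hi].
        - left. etr (subst sg a); [apply ct_sym, CV; auto|]. etr (subst sg b); auto. apply CV.
          intro x; rewrite cont_Mul, !cont_Var. split; [intro Hx; apply Hsub in Hx; intuition|intros [<-| <-]; auto].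
        - right. etr (subst sg a); [apply ct_sym, CV; auto|]. etr (subst sg b); auto. apply CV.
          intro x; rewrite cont_Var. split; [intro Hx; destruct (Hsub x Hx); subst; tauto|intros <-; auto]. }
      destruct (T 0 1) as [T1|T1]; auto. destruct (T 1 0) as [T2|T2]; auto; [|apply ct_sym; auto].
      etr (Mul x0 x1); auto. etr (Mul x1 x0); [apply ct_AC; auto; acs|]. apply ct_sym; auto. }
    apply full_of; auto. destruct (noncp a b Hc) as [(n&?&?)|(n&?&?)]; [eapply G; eauto|].
    apply (G b a n); auto. apply ct_sym; auto. }
  intros a b; split; [intro; apply SL_cp, Vcp; auto|intro; apply HS; auto].
Qed.

Lemma not_Ty_e : ~ Ty eL eR.
Proof. intros [H|H]; [specialize (H 0); simpl in H; lia|simpl in H; lia]. Qed.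

Lemma atom_full V W : atom V -> is_com_theory W -> subrel V W -> ~ subrel W V -> W eL eR.
Proof.
  intros (HV & Hf & Ha) HW H1 H2. destruct (Ha W HW H1) as [H|H]; [apply H; constructor|].
  exfalso; apply H2; intros a b; apply H.
Qed.

Theorem dir1 V : atom V -> neutral V -> releq V SL \/ releq V ZM.
Proof.
  intros HA HN. pose proof HA as (HV & Hf & Ha).
  apply NNPP; intro Hn. apply not_or_and in Hn as (nS & nZ).
  assert (nVZ : ~ subrel V ZM).
  { intro H. destruct (Ha ZM (gen_ct _) H) as [H1|H1].
    - assert (nz x0 x1) by (apply (proj1 (ZM_nz x0 x1)); apply (proj2 (H1 x0 x1)); constructor). destruct H0 as [H0|H0]; [specialize (H0 0); simpl in H0; lia|simpl in H0; lia].
    - apply nZ; intros a b; specialize (H1 a b); tauto. }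
  destruct (Xnz ZM V (fun a b => ZM_nz a b) HV nVZ) as (m & Hm & X).
  assert (nI : ~ V x0 (Mul x0 x0)).
  { intro H. apply nS, SL_atom; auto. apply gen_min; auto. intros a b (->&->). apply ct_sym; auto. }
  assert (ne : ~ V eL eR).
  { intro H. apply (ct_sub _ HV _ _ (fun k => match k with 0 => x0 | _ => Mul x0 x0 end)) in H. simpl in H.
    assert (E4 : V (pw x0 3) (pw x0 4)) by (etr (Mul (Mul x0 x0) (Mul x0 x0)); [apply ct_AC; auto; acs|];
      etr (Mul (Mul x0 (Mul x0 x0)) (Mul x0 x0)); auto; apply ct_AC; auto; acs).
    pose proof (E_mulp V HV _ _ x0 (4 * m - 3) E4) as E5.
    pose proof (iterX V m HV Hm X 4 x0) as X4.
    apply nI. etr (pw x0 (4 * m)); auto. etr (pw x0 (4 * m + 1)).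
    - etr (mulp (pw x0 3) x0 (4 * m - 3)); [apply ct_AC; auto; acs|]. etr (mulp (pw x0 4) x0 (4 * m - 3)); auto.
      apply ct_AC; auto; acs.
    - etr (Mul (pw x0 (4 * m)) x0); [apply ct_AC; auto; acs|]. apply ct_mulL; auto. apply ct_sym; auto. }
  assert (nTy : ~ subrel Ty V).
  { intro H. apply Hf, full_of; auto. etr (pw x0 (4 * m)); [apply (iterX V m); auto|].
    etr (pw x1 (4 * m)); [apply H; right; rewrite !len_pw; simpl; lia|]. apply ct_sym; auto; apply (iterX V m); auto. }
  specialize (HN Ty Tz Ty_ct Tz_ct eL eR).
  assert (L : vmeet (vmeet (vjoin V Ty) (vjoin Ty Tz)) (vjoin Tz V) eL eR).
  { apply HN. repeat split.
    - apply (atom_full V); auto; [apply gen_ct|intros a b; apply vmeet_l|].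
      intro H; apply nTy; intros a b Hab; apply H, vmeet_r; auto.
    - apply vmeet_r. right. refine (conj eq_refl (conj eq_refl _)). intro x; unfold eL, eR; rewrite !cont_Mul; tauto.
    - apply (atom_full V); auto; [apply gen_ct|intros a b; apply vmeet_r|].
      intro H; apply nTy; intros a b Hab; apply H, vmeet_l; left; auto. }
  apply not_Ty_e. revert L. apply vmeet_min; [apply Ty_ct| |].
  - apply vmeet_min; [apply Ty_ct| |]; intros a b (?&?); auto.
  - intros a b ([?|(La&Lb&Hc)] & Hv); auto. destruct (classic (AC a b)) as [Hac|Hac]; [left; auto|].
    exfalso; apply ne. eapply e_from; eauto.
Qed.

Theorem mainTheorem11 (V : rel) :
  atom V -> (neutral V <-> (releq V SL \/ releq V ZM)).
Proof.
  intros HA. split; [apply dir1; auto|]. pose proof HA as (HV & _ & _).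
  intros [H|H].
  - assert (HC : forall a b, V a b <-> cp a b) by (intros a b; rewrite (H a b); apply SL_cp).
    apply neutral_gen; auto; [apply Cond1_cp|apply Cond2_cp]; auto.
  - assert (HC : forall a b, V a b <-> nz a b) by (intros a b; rewrite (H a b); apply ZM_nz).
    apply neutral_gen; auto; [apply Cond1_nz|apply Cond2_nz]; auto.
Qed.
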